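(* On $\mathbb R^2$ with the Euclidean metric, let $\phi(x,y)=\frac14(x^4+y^4)$ and $X=(x^3+x^2y^2)\partial_x+y^3\partial_y$. Then there exist a neighbourhood $U$ of the origin and a constant $\delta>0$ with $d\phi(X)\ge\delta(|X|^2+|d\phi|^2)$ on $U$, but on no neighbourhood $U'$ of the origin does there exist a smooth $(2,0)$ tensor field $g$ with $g(v,v)>0$ for all $v\ne0$ and $d\phi=g(X,\cdot)$ on $U'$. *)

(* Defs.v *)
From Stdlib Require Import Reals List.
From Coquelicot Require Import Coquelicot.
Open Scope R_scope.

Definition pt := (R * R)%type.

Definition pdx (f : pt -> R) : pt -> R := fun p => Derive (fun t => f (t, snd p)) (fst p).
Definition pdy (f : pt -> R) : pt -> R := fun p => Derive (fun t => f (fst p, t)) (snd p).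

Fixpoint iter_pd (ds : list bool) (f : pt -> R) : pt -> R :=
  match ds with
  | nil => f
  | d :: ds' => (if d then pdy else pdx) (iter_pd ds' f)
  end.

(* Continuity of f : R^2 -> R at p (product / sup-norm topology = Euclidean). *)
Definition cont_at2 (f : pt -> R) (p : pt) : Prop :=
  forall eps, 0 < eps -> exists d, 0 < d /\ forall q : pt,
    Rabs (fst q - fst p) < d -> Rabs (snd q - snd p) < d -> Rabs (f q - f p) < eps.

Definition open2 (U : pt -> Prop) : Prop :=
  forall p, U p -> exists r, 0 < r /\ forall q : pt,
    Rabs (fst q - fst p) < r -> Rabs (snd q - snd p) < r -> U q.

(* f is smooth (C^infinity) on the open set U: every iterated partial
   derivative of every order exists on U and is continuous on U
   (continuous partials of all orders <=> C^infinity). *)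
Definition smooth_on (U : pt -> Prop) (f : pt -> R) : Prop :=
  forall (ds : list bool) (p : pt), U p ->
    cont_at2 (iter_pd ds f) p /\
    ex_derive (fun t => iter_pd ds f (t, snd p)) (fst p) /\
    ex_derive (fun t => iter_pd ds f (fst p, t)) (snd p).

Definition phi (p : pt) : R := / 4 * ((fst p) ^ 4 + (snd p) ^ 4).

Definition dphi1 : pt -> R := pdx phi.
Definition dphi2 : pt -> R := pdy phi.

Definition X1 (p : pt) : R := (fst p) ^ 3 + (fst p) ^ 2 * (snd p) ^ 2.
Definition X2 (p : pt) : R := (snd p) ^ 3.

Definition gform (g11 g12 g21 g22 : pt -> R) (p : pt) (v1 v2 w1 w2 : R) : R :=
  g11 p * v1 * w1 + g12 p * v1 * w2 + g21 p * v2 * w1 + g22 p * v2 * w2.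

(* Main.v *)
Require Import Defs.
From Stdlib Require Import Reals List Lra Psatz.
From Coquelicot Require Import Coquelicot.
Open Scope R_scope.
Lemma cont_of_ex (f : R -> R) x : ex_derive f x -> continuity_pt f x.
Proof. intros H. apply continuity_pt_filterlim. apply (ex_derive_continuous (K:=R_AbsRing) (V:=R_NormedModule)). exact H. Qed.

Lemma second_diff (f : R -> R) (h M : R) : 0 < h ->
  (forall t, Rabs t <= h -> ex_derive f t /\ ex_derive (Derive f) t /\
     Rabs (Derive (Derive f) t) <= M) ->
  Rabs (f h + f (- h) - 2 * f 0) <= 2 * h * h * M.
Proof.
  intros Hh H.
  set (G := fun t => f t + f (- t)).
  assert (HG : forall t, Rabs t <= h -> is_derive G t (Derive f t - Derive f (- t))).
  { intros t Ht. unfold G.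
    destruct (H t Ht) as [E1 _].
    assert (Ht' : Rabs (- t) <= h) by (rewrite Rabs_Ropp; exact Ht).
    destruct (H (- t) Ht') as [E2 _].
    replace (Derive f t - Derive f (- t)) with (Derive f t + (-1 * Derive f (- t))) by ring.
    apply (is_derive_plus f (fun t => f (- t))). apply Derive_correct; exact E1.
    assert (Hc : is_derive (fun t => f (- t)) t (scal (-1) (Derive f (- t)))).
    { apply (is_derive_comp f (fun t => - t)). apply Derive_correct; exact E2.
      auto_derive; auto; ring. }
    exact Hc. }
  destruct (MVT_gen G 0 h (fun t => Derive f t - Derive f (- t))) as [c [Hc Hm]].
  { intros x Hx. apply HG. rewrite Rmin_left in Hx by lra. rewrite Rmax_right in Hx by lra.
    rewrite Rabs_right; lra. }
  { intros x Hx. rewrite Rmin_left in Hx by lra. rewrite Rmax_right in Hx by lra.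
    apply cont_of_ex. eexists. apply HG. rewrite Rabs_right; lra. }
  rewrite Rmin_left in Hc by lra. rewrite Rmax_right in Hc by lra.
  assert (HGd : G h - G 0 = f h + f (- h) - 2 * f 0).
  { unfold G. rewrite Ropp_0. ring. }
  rewrite HGd in Hm. rewrite Hm.
  assert (Hb : Rabs (Derive f c - Derive f (- c)) <= 2 * c * M).
  { destruct (Req_dec c 0) as [Hc0|Hc0].
    - subst c. rewrite Ropp_0. replace (Derive f 0 - Derive f 0) with 0 by ring.
      rewrite Rabs_R0. assert (0 <= M). { assert (H0 : Rabs 0 <= h) by (rewrite Rabs_R0; lra).
        destruct (H 0 H0) as [_ [_ HM]].
        pose proof (Rabs_pos (Derive (Derive f) 0)); lra. } nra.
    - destruct (MVT_gen (Derive f) (- c) c (Derive (Derive f))) as [d [Hd Hm2]].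
      { intros x Hx. rewrite Rmin_left in Hx by lra. rewrite Rmax_right in Hx by lra.
        apply Derive_correct. apply H. apply Rabs_le; lra. }
      { intros x Hx. rewrite Rmin_left in Hx by lra. rewrite Rmax_right in Hx by lra.
        apply cont_of_ex. apply H. apply Rabs_le; lra. }
      rewrite Rmin_left in Hd by lra. rewrite Rmax_right in Hd by lra.
      rewrite Hm2. rewrite Rabs_mult. rewrite (Rabs_right (c - - c)) by lra.
      destruct (H d) as [_ [_ HM]]. apply Rabs_le; lra. nra. }
  rewrite Rabs_mult. rewrite (Rabs_right (h - 0)) by lra.
  assert (0 <= M). { assert (H0 : Rabs 0 <= h) by (rewrite Rabs_R0; lra).
        destruct (H 0 H0) as [_ [_ HM]].
        pose proof (Rabs_pos (Derive (Derive f) 0)); lra. }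
  replace (h - 0) with h by ring. apply Rle_trans with (2*c*M*h). apply Rmult_le_compat_r; lra. assert (c*M <= h*M) by (apply Rmult_le_compat_r; lra). nra.
Qed.
Lemma ineq x y : Rabs x < 1/2 -> Rabs y < 1/2 ->
  x^3 * (x^3 + x^2*y^2) + y^3 * y^3 >=
  1/10 * (((x^3 + x^2*y^2)^2 + (y^3)^2) + ((x^3)^2 + (y^3)^2)).
Proof.
  intros Hx Hy. apply Rabs_def2 in Hx. apply Rabs_def2 in Hy. destruct Hx as [Hx1 Hx2], Hy as [Hy1 Hy2].
  set (a := x^2). set (b := y^2).
  assert (Ha : 0 <= a) by (unfold a; nra). assert (Hb : 0 <= b) by (unfold b; nra).
  assert (Ha4 : a <= 1/4) by (unfold a; nra). assert (Hb4 : b <= 1/4) by (unfold b; nra).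
  assert (H1 : a^2*b <= a^3 + b^3).
  { destruct (Rle_dec a b). assert (a^2 <= b^2) by nra. nra. assert (b <= a) by lra. nra. }
  assert (H2 : x * (a^2*b) >= -(1/2)*(a^2*b)).
  { assert (0 <= a^2*b) by (apply Rmult_le_pos; nra). set (c := a^2*b) in *. nra. }
  assert (H3 : (x + b)^2 <= 2*(a + b^2)) by (unfold a; pose proof (pow2_ge_0 (x-b)); nra).
  assert (H4 : (x^3 + a*b)^2 = a^2 * (x+b)^2) by (unfold a, b; ring).
  assert (H5 : a^2*(x+b)^2 <= a^2 * (2*(a+b^2))) by (apply Rmult_le_compat_l; nra).
  assert (H6 : a^2*b^2 <= 1/4 * (a^2*b)) by (assert (0 <= a^2) by nra; nra).
  assert (E1 : x^3 * (x^3 + a*b) + y^3 * y^3 = a^3 + x*(a^2*b) + b^3) by (unfold a,b; ring).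
  assert (E2 : (x^3)^2 = a^3) by (unfold a; ring).
  assert (E3 : (y^3)^2 = b^3) by (unfold b; ring).
  assert (E4 : y^3*y^3 = b^3) by (unfold b; ring).
  rewrite E1, H4, E2, E3. nra.
Qed.

Lemma dphi1_eq x y : dphi1 (x, y) = x ^ 3.
Proof. unfold dphi1, pdx, phi; simpl. apply is_derive_unique.
  assert (H : is_derive (fun t : R => / 4 * (t ^ 4 + y ^ 4)) x (x ^ 3)) by (auto_derive; auto; field). exact H. Qed.
Lemma dphi2_eq x y : dphi2 (x, y) = y ^ 3.
Proof. unfold dphi2, pdy, phi; simpl. apply is_derive_unique.
  assert (H : is_derive (fun t : R => / 4 * (x ^ 4 + t ^ 4)) y (y ^ 3)) by (auto_derive; auto; field). exact H. Qed.

Lemma part1 : exists (U : pt -> Prop) (delta : R),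
      open2 U /\ U (0, 0) /\ 0 < delta /\
      forall p, U p ->
        dphi1 p * X1 p + dphi2 p * X2 p >=
        delta * ((X1 p ^ 2 + X2 p ^ 2) + (dphi1 p ^ 2 + dphi2 p ^ 2)).
Proof.
  exists (fun p => Rabs (fst p) < 1/2 /\ Rabs (snd p) < 1/2), (1/10).
  split; [|split; [|split]].
  - intros [p1 p2] [H1 H2]; simpl in *.
    exists (Rmin (1/2 - Rabs p1) (1/2 - Rabs p2)). split.
    + apply Rmin_pos; lra.
    + intros [q1 q2] Hq1 Hq2; simpl in *.
      pose proof (Rmin_l (1/2 - Rabs p1) (1/2 - Rabs p2)).
      pose proof (Rmin_r (1/2 - Rabs p1) (1/2 - Rabs p2)).
      replace q1 with ((q1 - p1) + p1) by ring. replace q2 with ((q2 - p2) + p2) by ring.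
      pose proof (Rabs_triang (q1 - p1) p1). pose proof (Rabs_triang (q2 - p2) p2).
      split; lra.
  - simpl. rewrite Rabs_R0. lra.
  - lra.
  - intros [x y] [Hx Hy]; simpl in *. rewrite dphi1_eq, dphi2_eq. unfold X1, X2; simpl.
    exact (ineq x y Hx Hy).
Qed.

Lemma part2 : ~ (exists (U' : pt -> Prop) (g11 g12 g21 g22 : pt -> R),
      open2 U' /\ U' (0, 0) /\
      smooth_on U' g11 /\ smooth_on U' g12 /\
      smooth_on U' g21 /\ smooth_on U' g22 /\
      (forall p, U' p -> forall v1 v2 : R, (v1, v2) <> (0, 0) ->
          gform g11 g12 g21 g22 p v1 v2 v1 v2 > 0) /\
      (forall p, U' p ->
          dphi1 p = gform g11 g12 g21 g22 p (X1 p) (X2 p) 1 0 /\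
          dphi2 p = gform g11 g12 g21 g22 p (X1 p) (X2 p) 0 1)).
Proof.
  intros [U [g11 [g12 [g21 [g22 [HU [H0 [S11 [_ [S21 [_ [Hpos Heq]]]]]]]]]]]].
  destruct (HU (0,0) H0) as [r [Hr HUr]].
  assert (Hin : forall t y, Rabs t < r -> Rabs y < r -> U (t, y)).
  { intros t y Ht Hy. apply HUr; simpl; rewrite Rminus_0_r; assumption. }
  set (g0 := g11 (0,0)).
  assert (Hg0 : g0 > 0).
  { assert (Hn : (1, 0) <> (0, 0)) by (intro E; injection E; lra).
    pose proof (Hpos (0,0) H0 1 0 Hn) as P. unfold gform in P. unfold g0. lra. }
  destruct (S11 nil (0,0) H0) as [C11 _].
  destruct (C11 (g0/2)) as [d2 [Hd2 Hc2]]; [lra|].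
  destruct (S21 (false :: false :: nil) (0,0) H0) as [C21 _].
  destruct (C21 1) as [d1 [Hd1 Hc1]]; [lra|].
  set (M := Rabs (iter_pd (false :: false :: nil) g21 (0,0)) + 1).
  assert (HM : 0 < M) by (unfold M; pose proof (Rabs_pos (iter_pd (false :: false :: nil) g21 (0,0))); lra).
  set (y := Rmin (Rmin (Rmin r d1) (Rmin d2 1)) (g0 / (2 * M)) / 2).
  assert (Hy0 : 0 < y).
  { unfold y. apply Rmult_lt_0_compat; [|lra].
    repeat apply Rmin_pos; try lra. apply Rdiv_lt_0_compat; lra. }
  assert (Hyr : y < r /\ y < d1 /\ y < d2 /\ y < 1 /\ y < g0 / (2 * M)).
  { unfold y.
    pose proof (Rmin_l (Rmin (Rmin r d1) (Rmin d2 1)) (g0 / (2 * M))).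
    pose proof (Rmin_r (Rmin (Rmin r d1) (Rmin d2 1)) (g0 / (2 * M))).
    pose proof (Rmin_l (Rmin r d1) (Rmin d2 1)). pose proof (Rmin_r (Rmin r d1) (Rmin d2 1)).
    pose proof (Rmin_l r d1). pose proof (Rmin_r r d1).
    pose proof (Rmin_l d2 1). pose proof (Rmin_r d2 1).
    assert (0 < Rmin (Rmin (Rmin r d1) (Rmin d2 1)) (g0 / (2 * M))).
    { repeat apply Rmin_pos; try lra. apply Rdiv_lt_0_compat; lra. }
    lra. }
  destruct Hyr as [Hyr [Hyd1 [Hyd2 [Hy1 HyM]]]].
  assert (Hyy : y * y < y) by nra.
  assert (Hay : Rabs y = y) by (apply Rabs_right; lra).
  set (f := fun t => g21 (t, y)).
  assert (Hsd : Rabs (f (y*y) + f (- (y*y)) - 2 * f 0) <= 2 * (y*y) * (y*y) * M).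
  { apply second_diff. nra.
    intros t Ht.
    assert (Ut : U (t, y)) by (apply Hin; lra).
    split; [|split].
    - exact (proj1 (proj2 (S21 nil (t, y) Ut))).
    - exact (proj1 (proj2 (S21 (false :: nil) (t, y) Ut))).
    - assert (Hc := Hc1 (t, y)). simpl in Hc. rewrite !Rminus_0_r in Hc.
      specialize (Hc ltac:(lra) ltac:(lra)).
      change (Rabs (iter_pd (false :: false :: nil) g21 (t, y)) <= M).
      unfold M.
      pose proof (Rabs_triang_inv (iter_pd (false :: false :: nil) g21 (t, y))
                                  (iter_pd (false :: false :: nil) g21 (0, 0))). simpl in H |- *. lra. }
  assert (Ey : y ^ 3 <> 0) by (apply pow_nonzero; lra).
  assert (E1 : f (- (y*y)) * y ^ 3 = - y ^ 6).
  { destruct (Heq (- (y*y), y)) as [E _]. apply Hin; rewrite ?Rabs_Ropp; [rewrite Rabs_right; nra | lra].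
    rewrite dphi1_eq in E. unfold gform, X1, X2 in E. simpl in E. unfold f. nra. }
  assert (E2 : 2 * g11 (y*y, y) * y ^ 6 + f (y*y) * y ^ 3 = y ^ 6).
  { destruct (Heq (y*y, y)) as [E _]. apply Hin; [rewrite Rabs_right; nra | lra].
    rewrite dphi1_eq in E. unfold gform, X1, X2 in E. simpl in E. unfold f. nra. }
  assert (E3 : f 0 * y ^ 3 = 0).
  { destruct (Heq (0, y)) as [E _]. apply Hin; [rewrite Rabs_R0; lra | lra].
    rewrite dphi1_eq in E. unfold gform, X1, X2 in E. simpl in E. unfold f. nra. }
  assert (Hsum : f (y*y) + f (- (y*y)) - 2 * f 0 = - 2 * y ^ 3 * g11 (y*y, y)).
  { apply (Rmult_eq_reg_r (y ^ 3)); [|exact Ey]. nra. }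
  assert (Hk : g11 (y*y, y) > g0 / 2).
  { assert (Hc := Hc2 (y*y, y)). simpl in Hc. rewrite !Rminus_0_r in Hc.
    rewrite Rabs_right in Hc by nra. rewrite Hay in Hc.
    specialize (Hc ltac:(lra) ltac:(lra)). fold g0 in Hc.
    apply Rabs_def2 in Hc. lra. }
  rewrite Hsum in Hsd.
  rewrite Rabs_left in Hsd by (assert (0 < y^3) by (apply pow_lt; lra); nra).
  assert (y * M < g0 / 2).
  { apply (Rmult_lt_reg_r (/ M)). apply Rinv_0_lt_compat; lra.
    replace (y * M * / M) with y by (field; lra).
    replace (g0 / 2 * / M) with (g0 / (2 * M)) by (field; lra). exact HyM. }
  assert (Hy3 : y ^ 3 = y * y * y) by ring. rewrite Hy3 in Hsd.
  assert (g11 (y*y, y) <= y * M).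
  { apply (Rmult_le_reg_r (2 * (y*y*y))). nra. nra. }
  lra.
Qed.

Theorem mainTheorem7 :
  (exists (U : pt -> Prop) (delta : R),
      open2 U /\ U (0, 0) /\ 0 < delta /\
      forall p, U p ->
        dphi1 p * X1 p + dphi2 p * X2 p >=
        delta * ((X1 p ^ 2 + X2 p ^ 2) + (dphi1 p ^ 2 + dphi2 p ^ 2)))
  /\
  ~ (exists (U' : pt -> Prop) (g11 g12 g21 g22 : pt -> R),
      open2 U' /\ U' (0, 0) /\
      smooth_on U' g11 /\ smooth_on U' g12 /\
      smooth_on U' g21 /\ smooth_on U' g22 /\
      (forall p, U' p -> forall v1 v2 : R, (v1, v2) <> (0, 0) ->
          gform g11 g12 g21 g22 p v1 v2 v1 v2 > 0) /\
      (forall p, U' p ->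
          dphi1 p = gform g11 g12 g21 g22 p (X1 p) (X2 p) 1 0 /\
          dphi2 p = gform g11 g12 g21 g22 p (X1 p) (X2 p) 0 1)).
Proof. split; [exact part1 | exact part2]. Qed.
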